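(* Let $\hat{\mathbb{N}}=\{n\in\mathbb{N}: n\ge 3\}$ and let $X,Y \subseteq \hat{\mathbb{N}}$ be non-empty. Then $\bigcap_{n \in X} \mathrm{pPol}\, R^{\Lambda}_n = \bigcap_{m \in Y} \mathrm{pPol}\, R^{\Lambda}_m$ if and only if $X = Y$.
   Context: Partial functions are on $\{0,1\}$: an $n$-ary partial function is a map $f:\operatorname{dom} f\to\{0,1\}$ with $\operatorname{dom} f\subseteq\{0,1\}^n$. For $\rho\subseteq\{0,1\}^h$, $\mathrm{pPol}\,\rho$ is the set of partial functions $f$ such that for every $h\times n$ matrix whose rows lie in $\operatorname{dom} f$ and whose columns lie in $\rho$, the column obtained by applying $f$ row-wise lies in $\rho$. For $m\ge3$, $R^{\Lambda}_m\subseteq\{0,1\}^{m+1}$ is the set of tuples $(x_1,\dots,x_{m+1})$ satisfying $x_1\lor\lnot x_2\lor\cdots\lor\lnot x_{m+1}$ and, for all pairwise distinct $i,j_1,j_2\in\{2,\dots,m+1\}$, $x_i\lor\lnot x_1\lor\lnot x_{j_1}\lor\lnot x_{j_2}$. *)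

(* Defs.v *)
From mathcomp Require Import all_boot.
Set Implicit Arguments. Unset Strict Implicit. Unset Printing Implicit Defensive.

(* An n-ary partial function on {0,1}: the domain is where it returns Some. *)
Definition pfun (n : nat) := ('I_n -> bool) -> option bool.

Definition pfunc := {n : nat & pfun n}.

Definition pPol (h : nat) (rho : ('I_h -> bool) -> Prop) (F : pfunc) : Prop :=
  let f := projT2 F in
  forall M : 'I_h -> 'I_(projT1 F) -> bool,
    (forall i, f (M i) <> None) ->
    (forall j, rho (fun i => M i j)) ->
    rho (fun i => odflt false (f (M i))).

(* R^Lambda_m subseteq {0,1}^(m+1); coordinate x_k (1-based) is x (k-1). *)
Definition RLambda (m : nat) (x : 'I_m.+1 -> bool) : Prop :=
  (x ord0 || ~~ [forall i : 'I_m.+1, (i != ord0) ==> x i]) /\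
  (forall i j1 j2 : 'I_m.+1,
      i != ord0 -> j1 != ord0 -> j2 != ord0 ->
      i != j1 -> i != j2 -> j1 != j2 ->
      x i || ~~ x ord0 || ~~ x j1 || ~~ x j2).

Definition bigcap_pPol (X : nat -> Prop) (F : pfunc) : Prop :=
  forall n, X n -> pPol (@RLambda n) F.

(* Main.v *)
Require Import Defs.
From mathcomp Require Import all_boot zify.
From Stdlib Require Classical_Prop.
Set Implicit Arguments. Unset Strict Implicit. Unset Printing Implicit Defensive.

Lemma avoid4 n (a b c d : 'I_n) : 5 <= n ->
  exists k : 'I_n, [/\ k != a, k != b, k != c & k != d].
Proof.
move=> hn.
case: (boolP [exists k : 'I_n, [&& k != a, k != b, k != c & k != d]]).
  by move/existsP=> [k /and4P [? ? ? ?]]; exists k.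
rewrite negb_exists => /forallP H.
have h0 := H (Ordinal (_ : 0 < n)). have h1 := H (Ordinal (_ : 1 < n)).
have h2 := H (Ordinal (_ : 2 < n)). have h3 := H (Ordinal (_ : 3 < n)).
have h4 := H (Ordinal (_ : 4 < n)).
move: (h0 ltac:(lia)) (h1 ltac:(lia)) (h2 ltac:(lia)) (h3 ltac:(lia)) (h4 ltac:(lia)).
rewrite -!val_eqE /=; clear H h0 h1 h2 h3 h4.
case: a b c d => [a ?] [b ?] [c ?] [d ?] /=.
lia.
Qed.

Lemma avoid3 n (a b c : 'I_n) : 4 <= n ->
  exists k : 'I_n, [/\ k != a, k != b & k != c].
Proof.
move=> hn.
case: (boolP [exists k : 'I_n, [&& k != a, k != b & k != c]]).
  by move/existsP=> [k /and3P [? ? ?]]; exists k.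
rewrite negb_exists => /forallP H.
have h0 := H (Ordinal (_ : 0 < n)). have h1 := H (Ordinal (_ : 1 < n)).
have h2 := H (Ordinal (_ : 2 < n)). have h3 := H (Ordinal (_ : 3 < n)).
move: (h0 ltac:(lia)) (h1 ltac:(lia)) (h2 ltac:(lia)) (h3 ltac:(lia)).
rewrite -!val_eqE /=; clear H h0 h1 h2 h3.
case: a b c => [a ?] [b ?] [c ?] /=.
lia.
Qed.

Lemma avoid2 n (a b : 'I_n) : 3 <= n ->
  exists k : 'I_n, k != a /\ k != b.
Proof.
move=> hn.
case: (boolP [exists k : 'I_n, (k != a) && (k != b)]).
  by move/existsP=> [k /andP [? ?]]; exists k.
rewrite negb_exists => /forallP H.
have h0 := H (Ordinal (_ : 0 < n)). have h1 := H (Ordinal (_ : 1 < n)).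
have h2 := H (Ordinal (_ : 2 < n)).
move: (h0 ltac:(lia)) (h1 ltac:(lia)) (h2 ltac:(lia)).
rewrite -!val_eqE /=; clear H h0 h1 h2.
case: a b => [a ?] [b ?] /=.
lia.
Qed.

Definition c1 n (s : option 'I_n) (k : 'I_n) : bool :=
  if s is Some i then k != i else false.
Definition c2 n (s : option 'I_n) (k : 'I_n) : bool :=
  if s is Some i then k == i else true.

Lemma comb_part1 m n (s : 'I_m.+1 -> option 'I_n) : 3 <= n -> 3 <= m ->
  (forall k, RLambda (fun r => c1 (s r) k)) ->
  (forall k, RLambda (fun r => c2 (s r) k)) ->
  s ord0 = None -> (forall r, r != ord0 -> isSome (s r)) -> m = n.
Proof.
move=> hn hm H1 H2 s0 Hall.
have G1 : forall k, exists2 r, r != ord0 & s r = Some k.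
  move=> k; case: (H1 k) => /= + _; rewrite s0 /= negb_forall => /existsP [r].
  rewrite negb_imply => /andP [rn0]; have := Hall r rn0.
  by case E: (s r) => // [i] _ /negPn /eqP ->; exists r.
have inj : forall q1 q2 k, q1 != ord0 -> q2 != ord0 -> q1 != q2 ->
    s q1 = Some k -> s q2 = Some k -> False.
  move=> q1 q2 k q1n q2n q12 e1 e2.
  have [k' [hk' _]] := avoid2 k k hn.
  have [r rn er] := G1 k'.
  case: (H2 k) => _ /(_ r q1 q2 rn q1n q2n).
  have rq1 : r != q1 by apply/eqP => E; move: er; rewrite E e1 => -[] /eqP; rewrite eq_sym (negbTE hk').
  have rq2 : r != q2 by apply/eqP => E; move: er; rewrite E e2 => -[] /eqP; rewrite eq_sym (negbTE hk').
  move=> /(_ rq1 rq2 q12); rewrite /= s0 er e1 e2 /= eqxx /= orbF.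
  by rewrite eq_sym (negbTE hk').
have k0P : 0 < n by lia.
pose tau (r : 'I_m) : 'I_n := odflt (Ordinal k0P) (s (lift ord0 r)).
have tauE : forall r, s (lift ord0 r) = Some (tau r).
  move=> r; rewrite /tau; have := Hall (lift ord0 r) ltac:(by rewrite eq_sym neq_lift).
  by case: (s _).
have tau_inj : injective tau.
  move=> r1 r2 e; case: (eqVneq r1 r2) => // ne; exfalso.
  apply: (inj (lift ord0 r1) (lift ord0 r2) (tau r1)).
  - by rewrite eq_sym neq_lift.
  - by rewrite eq_sym neq_lift.
  - by rewrite (inj_eq (@lift_inj _ ord0)).
  - by rewrite tauE.
  - by rewrite tauE e.
have le1 := @leq_card _ _ tau tau_inj; rewrite !card_ord in le1.
have tau_surj : forall k, exists r, tau r = k.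
  move=> k; have [r rn er] := G1 k.
  case: (unliftP ord0 r) rn er => [r' -> _|-> /eqP //].
  by rewrite tauE => -[<-]; exists r'.
have m0 : 0 < m by lia.
pose g (k : 'I_n) : 'I_m := odflt (Ordinal m0) [pick r | tau r == k].
have gK : cancel g tau.
  move=> k; rewrite /g; case: pickP => [r /eqP //|/= H].
  by have [r er] := tau_surj k; move: (H r); rewrite er eqxx.
have le2 := @leq_card _ _ g (can_inj gK); rewrite !card_ord in le2.
by apply/eqP; rewrite eqn_leq le1 le2.
Qed.

Lemma comb_part2 m n (s : 'I_m.+1 -> option 'I_n) : 3 <= n -> 3 <= m -> m <> n ->
  (forall k, RLambda (fun r => c1 (s r) k)) ->
  (forall k, RLambda (fun r => c2 (s r) k)) ->
  forall (i j1 j2 : 'I_m.+1) i0 a1 a2, i != ord0 -> j1 != ord0 -> j2 != ord0 ->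
  i != j1 -> i != j2 -> j1 != j2 ->
  s ord0 = Some i0 -> s i = None -> s j1 = Some a1 -> s j2 = Some a2 -> False.
Proof.
move=> hn hm hmn H1 H2 i j1 j2 i0 a1 a2 i_n j1n j2n ij1 ij2 j12 s0 si e1 e2.
have F1 : forall k q1 q2 b1 b2, k != i0 -> q1 != ord0 -> q2 != ord0 ->
    i != q1 -> i != q2 -> q1 != q2 -> s q1 = Some b1 -> s q2 = Some b2 ->
    k != b1 -> k != b2 -> False.
  move=> k q1 q2 b1 b2 hk q1n q2n iq1 iq2 q12 f1 f2 hb1 hb2.
  case: (H1 k) => _ /(_ i q1 q2 i_n q1n q2n iq1 iq2 q12).
  by rewrite /= si s0 f1 f2 /= hk hb1 hb2.
have F2 : forall r p, r != ord0 -> p != ord0 -> r != i -> p != i -> p != r ->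
    c2 (s r) i0 -> c2 (s p) i0.
  move=> r p rn pn ri pi pr cr.
  have ir : i != r by rewrite eq_sym.
  case: (H2 i0) => _ /(_ p i r pn i_n rn pi pr ir).
  by rewrite /= s0 si /= eqxx cr /= !orbF.
have j1i : j1 != i by rewrite eq_sym.
have j2i : j2 != i by rewrite eq_sym.
have j21 : j2 != j1 by rewrite eq_sym.
have a1i0 : a1 != i0.
  apply/negP => /eqP E.
  have := F2 j1 j2 j1n j2n j1i j2i j21 ltac:(by rewrite e1 E /= eqxx).
  rewrite e2 /= => /eqP E2.
  have [k [hk _]] := avoid2 i0 i0 hn.
  by apply: (F1 k j1 j2 a1 a2 hk) => //; rewrite ?E -?E2.
have a2i0 : a2 != i0.
  apply/negP => /eqP E.
  have := F2 j2 j1 j2n j1n j2i j1i j12 ltac:(by rewrite e2 E /= eqxx).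
  rewrite e1 /= => /eqP E2.
  have [k [hk _]] := avoid2 i0 i0 hn.
  by apply: (F1 k j1 j2 a1 a2 hk) => //; rewrite ?E -?E2.
have [hn4|hn3] : 4 <= n \/ n = 3 by lia.
  have [k [h1 h2 h3]] := avoid3 i0 a1 a2 hn4.
  exact: (F1 k j1 j2 a1 a2 h1).
have hm4 : 5 <= m.+1 by lia.
have a12 : a1 != a2.
  apply/negP => /eqP E; have [k [h1 h2]] := avoid2 i0 a1 hn.
  by apply: (F1 k j1 j2 a1 a2 h1) => //; rewrite -E.
have [r [r0 ri rj1 rj2]] := avoid4 ord0 i j1 j2 hm4.
have ir : i != r by rewrite eq_sym.
have j1r : j1 != r by rewrite eq_sym.
have j2r : j2 != r by rewrite eq_sym.
case er: (s r) => [b|].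
  case: (eqVneq b i0) => [Eb|bi0].
    have := F2 r j1 r0 j1n ri j1i j1r ltac:(by rewrite er Eb /= eqxx).
    by rewrite e1 /= eq_sym (negbTE a1i0).
  case: (eqVneq a1 b) => [Eab|nab].
    apply: (F1 a2 j1 r a1 b a2i0) => //; first by rewrite eq_sym.
    by rewrite -Eab eq_sym.
  by apply: (F1 a1 j2 r a2 b a1i0).
have := F2 r j1 r0 j1n ri j1i j1r ltac:(by rewrite er).
by rewrite e1 /= eq_sym (negbTE a1i0).
Qed.

Lemma comb m n (s : 'I_m.+1 -> option 'I_n) : 3 <= n -> 3 <= m -> m <> n ->
  (forall k, RLambda (fun r => c1 (s r) k)) ->
  (forall k, RLambda (fun r => c2 (s r) k)) ->
  RLambda (fun r => isSome (s r)).
Proof.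
move=> hn hm hmn H1 H2; split.
  case s0: (s ord0) => [i0|] //=.
  apply/negP => /forallP Hall; apply: hmn; apply: (comb_part1 hn hm H1 H2) => //.
  by move=> r rn; exact: (implyP (Hall r) rn).
move=> i j1 j2 i_n j1n j2n ij1 ij2 j12.
case si: (s i) => [?|] //=; case s0: (s ord0) => [i0|] //=.
case e1: (s j1) => [a1|] //=; case e2: (s j2) => [a2|] //=.
exfalso; exact: (comb_part2 hn hm hmn H1 H2 i_n j1n j2n ij1 ij2 j12 s0 si e1 e2).
Qed.

Lemma RLambda_ext m (x y : 'I_m.+1 -> bool) : (forall r, x r = y r) ->
  RLambda x -> RLambda y.
Proof.
move=> E [h1 h2]; split.
  by rewrite -E; rewrite (eq_forallb (fun r => congr1 (implb _) (E r))) in h1.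
by move=> i j1 j2 *; rewrite -!E; apply: h2.
Qed.

Definition Av n (j : 'I_(n+n)) : bool := n <= j.
Definition Bv n (k : 'I_n) (j : 'I_(n+n)) : bool :=
  if j < n then j != k :> nat else j == n + k :> nat.
Definition isA n (x : 'I_(n+n) -> bool) := [forall j, x j == Av j].
Definition isB n (k : 'I_n) (x : 'I_(n+n) -> bool) := [forall j, x j == Bv k j].
Definition fn n : pfun (n + n) := fun x =>
  match [pick k : 'I_n | isB k x] with
  | Some _ => Some true
  | None => if isA x then Some false else None
  end.
Definition Fn n : pfunc := existT _ (n + n) (@fn n).

Lemma rowB n (k i : 'I_n) x : isB i x ->
  x (lshift n k) = (k != i) /\ x (rshift n k) = (k == i).
Proof.
move/forallP=> H; split.
  by rewrite (eqP (H _)) /Bv /= ltn_ord.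
by rewrite (eqP (H _)) /Bv /= ltnNge leq_addr /= eqn_add2l.
Qed.

Lemma rowA n (k : 'I_n) x : isA x ->
  x (lshift n k) = false /\ x (rshift n k) = true.
Proof.
move/forallP=> H; split.
  by rewrite (eqP (H _)) /Av /= leqNgt ltn_ord.
by rewrite (eqP (H _)) /Av /= leq_addr.
Qed.

Lemma Fn_pres m n : 3 <= n -> 3 <= m -> m <> n -> pPol (@RLambda m) (Fn n).
Proof.
move=> hn hm hmn; rewrite /pPol /= => M Hdom Hcol.
pose s r := [pick k : 'I_n | isB k (M r)].
have E1 : forall r k, M r (lshift n k) = c1 (s r) k.
  move=> r k; have := Hdom r; rewrite /fn /s; case: pickP => [i Hi _|_].
    by case: (rowB k Hi).
  by case: ifP => // hA _; case: (rowA k hA).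
have E2 : forall r k, M r (rshift n k) = c2 (s r) k.
  move=> r k; have := Hdom r; rewrite /fn /s; case: pickP => [i Hi _|_].
    by case: (rowB k Hi).
  by case: ifP => // hA _; case: (rowA k hA).
apply: (@RLambda_ext _ (fun r => isSome (s r))).
  by move=> r; rewrite /fn /s; case: pickP => // _; case: ifP.
apply: comb hn hm hmn _ _ => k.
  exact: (RLambda_ext (E1^~ k) (Hcol (lshift n k))).
exact: (RLambda_ext (E2^~ k) (Hcol (rshift n k))).
Qed.

Lemma fnB n (k : 'I_n) : fn (@Bv n k) = Some true.
Proof.
rewrite /fn; case: pickP => // H; exfalso.
by move: (H k); rewrite /isB; move/negP; apply; apply/forallP => j.
Qed.

Lemma fnA n : 3 <= n -> fn (@Av n) = Some false.
Proof.
move=> hn; rewrite /fn; case: pickP => [k Hk|_].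
  exfalso; have [k' [hk _]] := avoid2 k k hn.
  by case: (rowB k' Hk); rewrite /Av /= leqNgt ltn_ord hk.
by have -> : isA (@Av n) by apply/forallP.
Qed.

Lemma Fn_not n : 3 <= n -> ~ pPol (@RLambda n) (Fn n).
Proof.
move=> hn; rewrite /pPol /= => H.
pose M (r : 'I_n.+1) : 'I_(n+n) -> bool :=
  fun j => if unlift ord0 r is Some k then Bv k j else Av j.
have M0 : M ord0 = @Av n by rewrite /M unlift_none.
have ML : forall k, M (lift ord0 k) = Bv k by move=> k; rewrite /M liftK.
have Hdom : forall r, fn (M r) <> None.
  by move=> r; case: (unliftP ord0 r) => [k ->|->]; rewrite ?ML ?M0 ?fnB ?fnA.
have Hcol : forall j, RLambda (fun i => M i j).
  move=> j; case: (ltnP j n) => hj; split.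
  - rewrite M0 /Av leqNgt hj /=.
    apply/negP => /forallP /(_ (lift ord0 (Ordinal hj))).
    by rewrite eq_sym neq_lift ML /Bv hj /= eqxx.
  - by move=> i j1 j2 *; rewrite M0 /Av leqNgt hj /= orbT.
  - by rewrite M0 /Av hj.
  move=> i j1 j2 _ j1n j2n _ _ j12.
  case: (unliftP ord0 j1) j1n j12 => [k1 ->|->] j1n j12; last by rewrite eqxx in j1n.
  case: (unliftP ord0 j2) j2n j12 => [k2 ->|->] j2n j12; last by rewrite eqxx in j2n.
  rewrite !ML /Bv ltnNge hj /=.
  case: (eqVneq (j : nat) (n + k1)) => [e1|]; last by rewrite /= orbT.
  case: (eqVneq (j : nat) (n + k2)) => [e2|]; last by rewrite /= orbT.
  exfalso; move: j12; rewrite (inj_eq (@lift_inj _ ord0)).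
  have : (k1 : nat) = k2 by lia.
  by move/val_inj => ->; rewrite eqxx.
case: (H M Hdom Hcol) => /= + _.
rewrite M0 fnA //=.
apply/negP; rewrite negbK; apply/forallP => r; apply/implyP => rn.
case: (unliftP ord0 r) rn => [k ->|->]; last by rewrite eqxx.
by rewrite ML fnB.
Qed.

Theorem mainTheorem20 (X Y : nat -> Prop) :
  (forall n, X n -> 3 <= n) -> (forall n, Y n -> 3 <= n) ->
  (exists n, X n) -> (exists n, Y n) ->
  ((forall F : pfunc, bigcap_pPol X F <-> bigcap_pPol Y F) <->
   (forall n, X n <-> Y n)).
Proof.
move=> HX HY _ _; split; last first.
  by move=> E F; split => H n /E; apply: H.
have key : forall X Y : nat -> Prop, (forall n, X n -> 3 <= n) ->
    (forall n, Y n -> 3 <= n) ->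
    (forall F : pfunc, bigcap_pPol Y F -> bigcap_pPol X F) ->
    forall n, X n -> Y n.
  move=> X' Y' HX' HY' E n xn.
  case: (Classical_Prop.classic (Y' n)) => // yn; exfalso.
  apply: (Fn_not (HX' n xn)); apply: (E (Fn n)) => // m ym.
  apply: Fn_pres; [exact: HX' | exact: HY' | by move=> e; apply: yn; rewrite -e].
move=> E n; split.
  by apply: key => // F /E.
by apply: key => // F /E.
Qed.
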